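(* Let $1<S\le N$, $L$ a band-width vector, $\dot W$ an $L$-admissible matrix, $W_\varepsilon=\mathrm{Id}+\varepsilon\dot W$, $k\in\mathbb N$, $\beta\in\Gamma$, $D_\beta=D_{k,\beta,L}$, $P_{\varepsilon,\beta}=D_\beta W_\varepsilon$. Fix $\ell\in\{1,\dots,N\}$ and $s_\ell$ with $\ell\in B_{s_\ell}$. Suppose that for $0<\varepsilon<\gamma$, $f^{(\ell)}_\varepsilon$ is a unit-norm eigenvector of $P_{\varepsilon,\beta}$ with eigenvalue $\lambda^{(\ell)}_\varepsilon$, that $\lambda^{(\ell)}_\varepsilon\to e^{-2\pi ik\beta_{s_\ell}}$, and that $f^{(\ell)}_\varepsilon\to f^{(\ell)}$ as $\varepsilon\to0$, where $f^{(\ell)}$ is a unit eigenvector of $\hat P_\beta=D_\beta\hat W_L$. Then for every $j\in\{1,\dots,N\}\setminus B_{s_\ell}$, with $s_j$ such that $j\in B_{s_j}$, $$\lim_{\varepsilon\to0}\frac{(f^{(\ell)}_\varepsilon)_j-(f^{(\ell)})_j}{\varepsilon}=\lim_{\varepsilon\to0}\frac{(f^{(\ell)}_\varepsilon)_j}{\varepsilon}=\frac{1}{e^{-2\pi ik\beta_{s_\ell}}-e^{-2\pi ik\beta_{s_j}}}\bigl(D_\beta\dot Wf^{(\ell)}\bigr)_j.$$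
   Context: A band-width vector is $L=(L_1,\dots,L_S)$ of positive integers with $\sum_sL_s=N$; $N_0=0$, $N_s=N_{s-1}+L_s$, $B_s=\{j:N_{s-1}<j\le N_s\}$. $D_{k,\beta,L}$ is the diagonal matrix with $j$-th entry $e^{-2\pi ik\beta_s}$ for $j\in B_s$. $\dot W$ is $L$-admissible if it is real symmetric and (1) $\dot W_{ij}\ge0$ for $i\ne j$, $\sum_j\dot W_{ij}=0$ for all $i$; (2) $\dot W$ has $N$ distinct eigenvalues; (3) each $\hat W_s=(\dot W_{jk})_{j,k\in B_s}$ has $L_s$ distinct eigenvalues. $\hat W_L$ is block diagonal with blocks $\hat W_1,\dots,\hat W_S$. $\Gamma=\{\beta\in\mathbb R^S: e^{-2\pi ik\beta_{s_1}}\neq e^{-2\pi ik\beta_{s_2}}\text{ for all }k\ne0,\ s_1\ne s_2\}$. For $v\in\mathbb C^N$, $(v)_j$ is its $j$-th entry. *)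

(* Defs.v *)
From Stdlib Require Import Reals Arith.
From Coquelicot Require Import Coquelicot.
Open Scope R_scope.

(* Indices are 0-based: matrix/vector indices i in {0,..,N-1},
   block indices s in {0,..,S-1}. Vectors are functions nat -> C,
   matrices are functions nat -> nat -> C (only entries with indices < N matter). *)

Fixpoint csum (n : nat) (f : nat -> C) : C :=
  match n with O => 0%C | S m => Cplus (csum m f) (f m) end.
Fixpoint rsum (n : nat) (f : nat -> R) : R :=
  match n with O => 0 | S m => rsum m f + f m end.
Fixpoint nsum (n : nat) (f : nat -> nat) : nat :=
  match n with O => 0%nat | S m => (nsum m f + f m)%nat end.

Definition Nb (L : nat -> nat) (s : nat) : nat := nsum s L.
Definition inB (L : nat -> nat) (s j : nat) : Prop := (Nb L s <= j < Nb L (S s))%nat.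
Definition inBb (L : nat -> nat) (s j : nat) : bool :=
  andb (Nat.leb (Nb L s) j) (Nat.ltb j (Nb L (S s))).

Definition bandwidth (S N : nat) (L : nat -> nat) : Prop :=
  (forall s, (s < S)%nat -> (0 < L s)%nat) /\ Nb L S = N.

Definition phase (k b : R) : C := (cos (2 * PI * k * b), - sin (2 * PI * k * b)).

Definition mmul (n : nat) (A B : nat -> nat -> C) : nat -> nat -> C :=
  fun i j => csum n (fun m => Cmult (A i m) (B m j)).
Definition mvec (n : nat) (A : nat -> nat -> C) (v : nat -> C) : nat -> C :=
  fun i => csum n (fun m => Cmult (A i m) (v m)).
Definition rmat (A : nat -> nat -> R) : nat -> nat -> C := fun i j => RtoC (A i j).

Definition Dmat (S : nat) (L : nat -> nat) (k : R) (beta : nat -> R) : nat -> nat -> C :=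
  fun i j => if Nat.eqb i j
             then csum S (fun s => if inBb L s i then phase k (beta s) else 0%C)
             else 0%C.

Definition Weps (Wd : nat -> nat -> R) (eps : R) : nat -> nat -> R :=
  fun i j => (if Nat.eqb i j then 1 else 0) + eps * Wd i j.

Definition What (S : nat) (L : nat -> nat) (Wd : nat -> nat -> R) : nat -> nat -> R :=
  fun i j => rsum S (fun s => if andb (inBb L s i) (inBb L s j) then Wd i j else 0).

Definition has_distinct_eigs (n : nat) (A : nat -> nat -> R) : Prop :=
  exists lam : nat -> R,
    (forall a b, (a < n)%nat -> (b < n)%nat -> lam a = lam b -> a = b) /\
    forall a, (a < n)%nat ->
      exists v : nat -> R, (exists i, (i < n)%nat /\ v i <> 0) /\
        forall i, (i < n)%nat -> rsum n (fun m => A i m * v m) = lam a * v i.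

Definition admissible (S N : nat) (L : nat -> nat) (Wd : nat -> nat -> R) : Prop :=
  (forall i j, (i < N)%nat -> (j < N)%nat -> Wd i j = Wd j i) /\
  (forall i j, (i < N)%nat -> (j < N)%nat -> i <> j -> 0 <= Wd i j) /\
  (forall i, (i < N)%nat -> rsum N (fun j => Wd i j) = 0) /\
  has_distinct_eigs N Wd /\
  (forall s, (s < S)%nat ->
     has_distinct_eigs (L s) (fun i j => Wd (Nb L s + i)%nat (Nb L s + j)%nat)).

Definition inGamma (S : nat) (beta : nat -> R) : Prop :=
  forall (k : Z), k <> 0%Z -> forall s1 s2, (s1 < S)%nat -> (s2 < S)%nat -> s1 <> s2 ->
    phase (IZR k) (beta s1) <> phase (IZR k) (beta s2).

Definition unit_eigvec (N : nat) (A : nat -> nat -> C) (lam : C) (v : nat -> C) : Prop :=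
  rsum N (fun i => (Cmod (v i))^2) = 1 /\
  forall i, (i < N)%nat -> mvec N A v i = Cmult lam (v i).

(* Main.v *)
Require Import Defs.
From Stdlib Require Import Reals Arith Lia Lra.
From Coquelicot Require Import Coquelicot.
Open Scope R_scope.

Lemma csum_zero (g : nat -> C) : forall n,
  (forall m, (m < n)%nat -> g m = 0%C) -> csum n g = 0%C.
Proof. induction n; intros H; simpl; [reflexivity|]. rewrite IHn by (intros; apply H; lia).
  rewrite H by lia. ring. Qed.

Lemma csum_delta (j : nat) (g : nat -> C) : forall n,
  (forall m, m <> j -> g m = 0%C) -> (j < n)%nat -> csum n g = g j.
Proof.
  induction n as [|n IH]; intros Hg Hj; [lia|].
  simpl. destruct (Nat.eq_dec j n) as [E|Hne].
  - rewrite csum_zero by (intros; apply Hg; lia). subst. ring.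
  - rewrite IH; auto; [|lia]. rewrite (Hg n); [ring|lia].
Qed.

Lemma csum_scal (c : C) (g : nat -> C) : forall n,
  csum n (fun m => (c * g m)%C) = (c * csum n g)%C.
Proof. induction n; simpl; [ring|]. rewrite IHn. ring. Qed.

Lemma csum_plus (g h : nat -> C) : forall n,
  csum n (fun m => (g m + h m)%C) = (csum n g + csum n h)%C.
Proof. induction n; simpl; [ring|]. rewrite IHn. ring. Qed.

Lemma csum_ext (g h : nat -> C) : forall n,
  (forall m, (m < n)%nat -> g m = h m) -> csum n g = csum n h.
Proof. induction n; intros H; simpl; [reflexivity|]. rewrite IHn by (intros; apply H; lia).
  rewrite H by lia. reflexivity. Qed.

Lemma nsum_mono (L : nat -> nat) : forall m n, (m <= n)%nat -> (nsum m L <= nsum n L)%nat.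
Proof. intros m n H; induction H; simpl; lia. Qed.

Lemma csum_lim {T} (F : (T -> Prop) -> Prop) (FF : Filter F) (h : T -> nat -> C) (h0 : nat -> C) :
  forall n, (forall m, (m < n)%nat -> filterlim (fun t => h t m) F (locally (h0 m))) ->
  filterlim (fun t => csum n (h t)) F (locally (csum n h0)).
Proof.
  induction n; intros H; simpl.
  - apply filterlim_const.
  - eapply filterlim_comp_2.
    + apply IHn. intros; apply H; lia.
    + apply H; lia.
    + apply (@filterlim_plus C_AbsRing C_NormedModule).
Qed.

Lemma Cmult_lim {T} (F : (T -> Prop) -> Prop) (FF : Filter F) (g h : T -> C) (a b : C) :
  filterlim g F (locally a) -> filterlim h F (locally b) ->
  filterlim (fun t => (g t * h t)%C) F (locally (a * b)%C).
Proof.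
  intros Hg Hh.
  apply (filterlim_locally_ball_norm (K:=C_AbsRing) (U:=C_NormedModule)). intros eps.
  pose proof (cond_pos eps) as He.
  pose proof (Cmod_ge_0 a) as Ha. pose proof (Cmod_ge_0 b) as Hb.
  set (A := Cmod a) in *. set (B := Cmod b) in *.
  assert (Hd : 0 < Rmin 1 (Rmin (eps/(2*(B+1))) (eps/(2*(A+1))))).
  { repeat apply Rmin_glb_lt; try lra; apply Rdiv_lt_0_compat; lra. }
  set (d := Rmin 1 (Rmin (eps/(2*(B+1))) (eps/(2*(A+1))))) in *.
  assert (d1 : d <= 1) by apply Rmin_l.
  assert (d2 : d <= eps/(2*(B+1))) by (eapply Rle_trans; [apply Rmin_r|apply Rmin_l]).
  assert (d3 : d <= eps/(2*(A+1))) by (eapply Rle_trans; [apply Rmin_r|apply Rmin_r]).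
  apply (filterlim_locally_ball_norm (K:=C_AbsRing) (U:=C_NormedModule)) with (eps := mkposreal _ Hd) in Hg.
  apply (filterlim_locally_ball_norm (K:=C_AbsRing) (U:=C_NormedModule)) with (eps := mkposreal _ Hd) in Hh.
  generalize (filter_and _ _ Hg Hh). apply filter_imp. simpl. intros t [H1 H2].
  unfold ball_norm in *. change (Cmod (g t - a) < d) in H1. change (Cmod (h t - b) < d) in H2.
  change (Cmod (g t * h t - a * b) < eps).
  replace (g t * h t - a * b)%C with ((g t - a) * (h t - b) + (g t - a) * b + a * (h t - b))%C by ring.
  eapply Rle_lt_trans; [apply Cmod_triangle|].
  eapply Rle_lt_trans; [apply Rplus_le_compat_r; apply Cmod_triangle|].
  rewrite !Cmod_mult. fold A B.
  set (x := Cmod (g t - a)) in *. set (y := Cmod (h t - b)) in *.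
  assert (0 <= x) by apply Cmod_ge_0. assert (0 <= y) by apply Cmod_ge_0.
  assert (x * (B+1) <= eps/2).
  { apply Rle_trans with (d * (B+1)); [nra|].
    apply Rmult_le_compat_r with (r := B+1) in d2; [|lra].
    replace (eps / (2 * (B + 1)) * (B + 1)) with (eps/2) in d2 by (field; lra). lra. }
  assert (A * y < eps/2).
  { apply Rle_lt_trans with (A * d); [nra|].
    apply Rmult_le_compat_l with (r := A) in d3; [|lra].
    apply Rle_lt_trans with (A * (eps / (2 * (A + 1)))); [lra|].
    apply Rmult_lt_reg_r with (2*(A+1)); [lra|].
    replace (A * (eps / (2 * (A + 1))) * (2 * (A + 1))) with (A*eps) by (field; lra). nra. }
  nra.
Qed.

Lemma Cminus_lim {T} (F : (T -> Prop) -> Prop) (FF : Filter F) (g h : T -> C) (a b : C) :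
  filterlim g F (locally a) -> filterlim h F (locally b) ->
  filterlim (fun t => (g t - h t)%C) F (locally (a - b)%C).
Proof.
  intros Hg Hh.
  apply (filterlim_comp_2 (G := locally a) (H := locally (opp b)) (I := locally (a - b)%C) g (fun t => opp (h t)) (fun x y : C_NormedModule => plus x y)); [exact Hg| |].
  - eapply filterlim_comp; [exact Hh|]. apply (@filterlim_opp C_AbsRing C_NormedModule).
  - apply (@filterlim_plus C_AbsRing C_NormedModule).
Qed.

Lemma lim_nonzero {T} (F : (T -> Prop) -> Prop) (FF : Filter F) (g : T -> C) (a : C) :
  a <> 0%C -> filterlim g F (locally a) -> F (fun t => g t <> 0%C).
Proof.
  intros Ha H. apply (filterlim_locally_ball_norm (K:=C_AbsRing) (U:=C_NormedModule)) with (eps := mkposreal _ (proj1 (Cmod_gt_0 a) Ha)) in H.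
  eapply filter_imp; [|exact H]. simpl. intros t Hb E.
  unfold ball_norm in Hb. change (Cmod (g t - a) < Cmod a) in Hb.
  rewrite E in Hb. replace (0 - a)%C with (- a)%C in Hb by ring.
  rewrite Cmod_opp in Hb. lra.
Qed.

Lemma Cinv_lim {T} (F : (T -> Prop) -> Prop) (FF : Filter F) (g : T -> C) (a : C) :
  a <> 0%C -> filterlim g F (locally a) -> filterlim (fun t => / g t)%C F (locally (/ a)%C).
Proof.
  intros Ha H.
  pose proof (proj1 (Cmod_gt_0 a) Ha) as Hm. set (m := Cmod a) in *.
  apply (filterlim_locally_ball_norm (K:=C_AbsRing) (U:=C_NormedModule)). intros eps.
  assert (Hd : 0 < Rmin (m/2) (eps*m*m/2)).
  { apply Rmin_glb_lt; [lra|]. pose proof (cond_pos eps).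
    apply Rmult_lt_0_compat; [|lra]. apply Rmult_lt_0_compat; [|lra]. nra. }
  apply (filterlim_locally_ball_norm (K:=C_AbsRing) (U:=C_NormedModule)) with (eps := mkposreal _ Hd) in H.
  eapply filter_imp; [|exact H]. simpl. intros t Hb.
  unfold ball_norm in *. change (Cmod (g t - a) < Rmin (m/2) (eps*m*m/2)) in Hb.
  change (Cmod (/ g t - / a) < eps).
  assert (H1 := Rmin_l (m/2) (eps*m*m/2)). assert (H2 := Rmin_r (m/2) (eps*m*m/2)).
  assert (Hz : m/2 < Cmod (g t)).
  { assert (Ht := Cmod_triangle (g t) (a - g t)%C).
    replace (g t + (a - g t))%C with a in Ht by ring.
    replace (a - g t)%C with (- (g t - a))%C in Ht by ring. rewrite Cmod_opp in Ht.
    fold m in Ht. lra. }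
  assert (Hg0 : g t <> 0%C). { intro E; rewrite E, Cmod_0 in Hz. lra. }
  replace (/ g t - / a)%C with (- (g t - a) * / g t * / a)%C by (field; auto).
  rewrite !Cmod_mult, Cmod_opp, !Cmod_inv by auto. fold m.
  set (z := Cmod (g t)) in *. set (d := Cmod (g t - a)) in *.
  assert (0 <= d) by apply Cmod_ge_0.
  apply Rle_lt_trans with (d * (2/m) * /m).
  - apply Rmult_le_compat_r; [left; apply Rinv_0_lt_compat; lra|].
    apply Rmult_le_compat_l; auto.
    apply Rlt_le. apply Rinv_lt_contravar in Hz; [|nra]. replace (/ (m/2)) with (2/m) in Hz by (field; lra). exact Hz.
  - replace (d * (2/m) * /m) with (d * 2 / (m*m)) by (field; lra).
    apply Rmult_lt_reg_r with (m*m); [nra|]. unfold Rdiv. rewrite Rmult_assoc, Rinv_l by nra. lra.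
Qed.

Lemma at_right_interval (r : R) : 0 < r -> at_right 0 (fun e => 0 < e < r).
Proof.
  intros Hr. unfold at_right, within. exists (mkposreal r Hr). intros y Hy Hpos.
  simpl in *. change (Rabs (y + - 0) < r) in Hy. apply Rabs_def2 in Hy. lra.
Qed.

Lemma RtoC_lim0 : filterlim (fun e => RtoC e) (at_right 0) (locally (RtoC 0)).
Proof.
  apply (filterlim_locally_ball_norm (K:=C_AbsRing) (U:=C_NormedModule)). intros eps.
  eapply filter_imp; [|apply (at_right_interval eps (cond_pos eps))].
  intros e He. unfold ball_norm. change (Cmod (RtoC e - RtoC 0) < eps).
  rewrite <- RtoC_minus, Cmod_R. rewrite Rabs_pos_eq; lra.
Qed.

Lemma Dmat_diag (nS : nat) (L : nat -> nat) (kk : R) (beta : nat -> R) (j sj : nat) :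
  (sj < nS)%nat -> inB L sj j -> Dmat nS L kk beta j j = phase kk (beta sj).
Proof.
  intros Hsj [H1 H2]. unfold Dmat. rewrite Nat.eqb_refl.
  rewrite (csum_delta sj); [ | | exact Hsj].
  - unfold inBb. destruct (Nat.leb_spec (Nb L sj) j); [|lia].
    destruct (Nat.ltb_spec j (Nb L (S sj))); [reflexivity|lia].
  - intros m Hm. unfold inBb. unfold Nb in *.
    destruct (Nat.leb_spec (nsum m L) j); cbn [andb]; [|reflexivity].
    destruct (Nat.ltb_spec j (nsum (S m) L)); [|reflexivity].
    exfalso. destruct (Nat.lt_total m sj) as [Hlt|[Hlt|Hlt]]; [| lia |].
    + pose proof (nsum_mono L (S m) sj Hlt). lia.
    + pose proof (nsum_mono L (S sj) m Hlt). lia.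
Qed.

Lemma mvec_D (nS N : nat) (L : nat -> nat) (kk : R) (beta : nat -> R) (A : nat -> nat -> C)
  (u : nat -> C) (j : nat) : (j < N)%nat ->
  mvec N (mmul N (Dmat nS L kk beta) A) u j = (Dmat nS L kk beta j j * csum N (fun m => A j m * u m))%C.
Proof.
  intros Hj. unfold mvec, mmul. rewrite <- csum_scal. apply csum_ext. intros m Hm.
  rewrite (csum_delta j); [ring| |exact Hj].
  intros m' Hm'. unfold Dmat. replace (Nat.eqb j m') with false by (symmetry; apply Nat.eqb_neq; auto).
  ring.
Qed.
Theorem proposition4p7
  (S N : nat) (L : nat -> nat) (Wd : nat -> nat -> R) (k : nat) (beta : nat -> R)
  (gamma : R) (f : R -> nat -> C) (lam : R -> C) (f0 : nat -> C) (l sl : nat) :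
  (1 < S)%nat -> (S <= N)%nat -> bandwidth S N L -> admissible S N L Wd ->
  (0 < k)%nat -> inGamma S beta ->
  (l < N)%nat -> (sl < S)%nat -> inB L sl l ->
  0 < gamma ->
  (forall eps, 0 < eps < gamma ->
     unit_eigvec N (mmul N (Dmat S L (INR k) beta) (rmat (Weps Wd eps))) (lam eps) (f eps)) ->
  filterlim lam (at_right 0) (locally (phase (INR k) (beta sl))) ->
  (forall i, (i < N)%nat -> filterlim (fun eps => f eps i) (at_right 0) (locally (f0 i))) ->
  (exists mu : C, unit_eigvec N (mmul N (Dmat S L (INR k) beta) (rmat (What S L Wd))) mu f0) ->
  forall j sj, (j < N)%nat -> ~ inB L sl j -> (sj < S)%nat -> inB L sj j ->
    let v := Cmult (Cinv (Cminus (phase (INR k) (beta sl)) (phase (INR k) (beta sj))))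
                   (mvec N (mmul N (Dmat S L (INR k) beta) (rmat Wd)) f0 j) in
    filterlim (fun eps => Cdiv (Cminus (f eps j) (f0 j)) (RtoC eps)) (at_right 0) (locally v) /\
    filterlim (fun eps => Cdiv (f eps j) (RtoC eps)) (at_right 0) (locally v).
Proof.
  intros HS HSN [HL HN] Hadm Hk HG Hl Hsl HinBl Hgam Heig Hlam Hf Hf0 j sj Hj HnB Hsj HinBj v.
  set (D := Dmat S L (INR k) beta).
  set (dj := phase (INR k) (beta sj)).
  set (dl := phase (INR k) (beta sl)).
  assert (HDj : D j j = dj) by (apply Dmat_diag; auto).
  assert (Hne : dl <> dj).
  { assert (sl <> sj) by (intro E; subst; contradiction).
    unfold dl, dj. rewrite INR_IZR_INZ. apply HG; auto. lia. }
  set (G := fun eps => csum N (fun m => (RtoC (Wd j m) * f eps m)%C)).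
  set (G0 := csum N (fun m => (RtoC (Wd j m) * f0 m)%C)).
  assert (HG0 : filterlim G (at_right 0) (locally G0)).
  { apply csum_lim; [apply _|]. intros m Hm. apply Cmult_lim; [apply _| apply filterlim_const | apply Hf; auto]. }
  assert (Heq : forall eps, 0 < eps < gamma -> (dj * (f eps j + RtoC eps * G eps) = lam eps * f eps j)%C).
  { intros eps He. destruct (Heig eps He) as [_ Hev]. specialize (Hev j Hj).
    rewrite mvec_D in Hev by auto. fold D in Hev. rewrite HDj in Hev. rewrite <- Hev. f_equal.
    transitivity (csum N (fun m => ((if Nat.eqb j m then f eps m else 0) + RtoC eps * (RtoC (Wd j m) * f eps m))%C)).
    - rewrite csum_plus, csum_scal. f_equal. symmetry. rewrite (csum_delta j); auto.
      + rewrite Nat.eqb_refl. reflexivity.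
      + intros m Hm. replace (Nat.eqb j m) with false by (symmetry; apply Nat.eqb_neq; auto). reflexivity.
    - apply csum_ext. intros m Hm.
      unfold rmat, Weps. rewrite RtoC_plus, RtoC_mult.
      destruct (Nat.eqb j m); ring. }
  assert (Hdlj : (dl - dj)%C <> 0%C) by (apply Cminus_eq_contra; auto).
  assert (Hld : filterlim (fun e => (lam e - dj)%C) (at_right 0) (locally (dl - dj)%C)).
  { apply Cminus_lim; [apply _|exact Hlam|apply filterlim_const]. }
  assert (Hnz := lim_nonzero _ _ _ _ Hdlj Hld).
  assert (HQ : filterlim (fun e => (dj * G e * / (lam e - dj))%C) (at_right 0)
                 (locally (dj * G0 * / (dl - dj))%C)).
  { apply Cmult_lim; [apply _| |apply Cinv_lim; auto; apply _].
    apply Cmult_lim; [apply _|apply filterlim_const|exact HG0]. }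
  assert (Hv : v = (dj * G0 * / (dl - dj))%C).
  { unfold v. rewrite mvec_D by auto. fold D. rewrite HDj. unfold rmat. fold G0 dl dj. ring. }
  assert (HRe : forall e, 0 < e -> RtoC e <> 0%C).
  { intros e He E. apply (f_equal fst) in E. simpl in E. lra. }
  assert (Hdiv : filterlim (fun e => Cdiv (f e j) (RtoC e)) (at_right 0) (locally v)).
  { rewrite Hv. eapply filterlim_ext_loc; [|exact HQ].
    generalize (filter_and _ _ (at_right_interval gamma Hgam) Hnz). apply filter_imp.
    intros e [He Hn].
    assert (H2 : (f e j * (lam e - dj) = RtoC e * (dj * G e))%C).
    { replace (f e j * (lam e - dj))%C with (lam e * f e j - dj * f e j)%C by ring.
      rewrite <- (Heq e He). ring. }
    replace (f e j) with (f e j * (lam e - dj) / (lam e - dj))%C by (field; auto).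
    rewrite H2. field. split; auto. apply HRe; lra. }
  assert (Hfz : filterlim (fun e => f e j) (at_right 0) (locally (RtoC 0 * v)%C)).
  { eapply filterlim_ext_loc; [| apply Cmult_lim; [apply _|apply RtoC_lim0|exact Hdiv]].
    eapply filter_imp; [|apply (at_right_interval gamma Hgam)].
    intros e He. simpl. field. apply HRe; lra. }
  assert (Hf0j : f0 j = 0%C).
  { rewrite (filterlim_locally_unique (K:=C_AbsRing) (V:=C_NormedModule) (F:=at_right 0) (fun e => f e j) (f0 j) (RtoC 0 * v)%C); auto.
    ring. }
  split; [|exact Hdiv].
  eapply filterlim_ext; [|exact Hdiv]. intros e. simpl. rewrite Hf0j. unfold Cminus. rewrite Copp_0, Cplus_0_r. reflexivity.
Qed.
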